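(* In the setting below, let $\eta\in\mathbb{C}^V$ satisfy $\mu_p\|\eta\|_p<1$. Then $I+\alpha_0G_0^{V;V}D_\eta$ is invertible, the forward Born series $\sum_{j=1}^\infty K_j(\eta,\dots,\eta)$ converges in $\ell^p(R\times S)$, $\Lambda_\eta=G_0^{R;S}-\sum_{j=1}^\infty K_j(\eta,\dots,\eta)$, and for every $N\ge1$ $$\Big\|\Lambda_\eta-\Big(G_0^{R;S}-\sum_{j=1}^N K_j(\eta,\dots,\eta)\Big)\Big\|_{\ell^p(R\times S)}\le \nu_p\,\|\eta\|_p^{N+1}\mu_p^{N}\,\frac{1}{1-\mu_p\|\eta\|_p}.$$
   Context: Setting: Let $V$ and $\delta V$ be finite disjoint sets (interior and boundary vertices of a graph), let $R,S\subseteq\delta V$ be nonempty (receivers and sources), let $\alpha_0>0$, and let $G_0$ (the background Green's function) be a complex matrix with rows and columns indexed by $V\cup\delta V$. (In the paper, $G_0(x,y)$ is the value at $x$ of the solution of the discrete diffusion equation $Lu+\alpha_0u=f$ on $V$, $L$ the combinatorial Laplacian, with Robin boundary condition $tu+\partial u=g$ on $\delta V$, for a unit source at $y$; only the matrix $G_0$ is used.) For $U,W\subseteq V\cup\delta V$, $G_0^{U;W}$ is the submatrix with rows indexed by $U$ and columns by $W$; for a single vertex $r$, $G_0^{r;V}$ is a row vector and $G_0^{V;s}$ a column vector. For $a\in\mathbb{C}^V$, $D_a$ is the diagonal $V\times V$ matrix with diagonal $a$. For $j\ge1$ define the multilinear map $K_j:(\mathbb{C}^V)^j\to\mathbb{C}^{R\times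 S}$ by $$K_j(\eta_1,\dots,\eta_j)(r,s)=(-1)^{j+1}\alpha_0^{\,j}\,G_0^{r;V}D_{\eta_1}G_0^{V;V}D_{\eta_2}\cdots G_0^{V;V}D_{\eta_j}G_0^{V;s},\qquad r\in R,\ s\in S.$$ Fix $p,q\in[1,\infty]$ with $1/p+1/q=1$; $\|\cdot\|_p$ is the $\ell^p$ norm on $\mathbb{C}^V$ and on $\mathbb{C}^{R\times S}$ (the latter viewed as a vector of length $|R||S|$). Define $$\nu_p=\alpha_0\Big(\sum_{r\in R}\|G_0^{r;V}\|_{\ell^q(V)}^p\Big)^{1/p}\Big(\sum_{s\in S}\|G_0^{V;s}\|_{\ell^q(V)}^p\Big)^{1/p},\qquad \mu_p=\alpha_0\max_{v\in V}\|G_0^{v;V}\|_{\ell^q(V)}$$ (with the usual modification of the outer sums to maxima when $p=\infty$). For a vertex potential $\eta\in\mathbb{C}^V$ such that $I+\alpha_0G_0^{V;V}D_\eta$ is invertible, the Robin-to-Dirichlet map $\Lambda_\eta\in\mathbb{C}^{R\times S}$ (value at receiver $r$ of the solution of the perturbed problem $Lu+\alpha_0(1+\eta)u=0$ with unit Robin source at $s$) is given by $$\Lambda_\eta(r,s)=G_0(r,s)-\alpha_0\,G_0^{r;V}D_\eta\big(I+\alpha_0G_0^{V;V}D_\eta\big)^{-1}G_0^{V;s}.$$ *)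

(* Defs.v *)
From Stdlib Require Import Reals List.
Import ListNotations.
Open Scope R_scope.

Definition Cplx : Type := (R * R)%type.
Definition RtoC (x : R) : Cplx := (x, 0).
Definition C0 : Cplx := (0, 0).
Definition C1 : Cplx := (1, 0).
Definition Cadd (z w : Cplx) : Cplx := (fst z + fst w, snd z + snd w).
Definition Copp (z : Cplx) : Cplx := (- fst z, - snd z).
Definition Csub (z w : Cplx) : Cplx := Cadd z (Copp w).
Definition Cmul (z w : Cplx) : Cplx :=
  (fst z * fst w - snd z * snd w, fst z * snd w + snd z * fst w).
Definition Cmod (z : Cplx) : R := sqrt (fst z ^ 2 + snd z ^ 2).

Definition Csum {A : Type} (l : list A) (f : A -> Cplx) : Cplx :=
  fold_right (fun x acc => Cadd (f x) acc) C0 l.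
Definition Rsum {A : Type} (l : list A) (f : A -> R) : R :=
  fold_right (fun x acc => f x + acc) 0 l.
Definition Rmaxl {A : Type} (l : list A) (f : A -> R) : R :=
  fold_right (fun x acc => Rmax (f x) acc) 0 l.

Inductive ext : Type := Fin (a : R) | Infty.

Definition conj_exp (p q : ext) : Prop :=
  match p, q with
  | Fin a, Fin b => 1 < a /\ 1 < b /\ / a + / b = 1
  | Fin a, Infty => a = 1
  | Infty, Fin b => b = 1
  | Infty, Infty => False
  end.

(** real power of a nonnegative number, with 0^a = 0 *)
Definition rpow (x a : R) : R :=
  if Rle_dec x 0 then 0 else Rpower x a.

(** l^p norm of the nonnegative family (f x)_{x in l} (f x = |component|) *)
Definition lpnorm {A : Type} (p : ext) (l : list A) (f : A -> R) : R :=
  match p with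
  | Fin a => rpow (Rsum l (fun x => rpow (f x) a)) (/ a)
  | Infty => Rmaxl l f
  end.

(** Vertices are labelled by natural numbers; V, dV are the (duplicate-free)
    lists of interior and boundary vertices. Matrices/vectors are functions. *)

Definition nu_p (p q : ext) (V R_ S_ : list nat) (alpha0 : R)
    (G0 : nat -> nat -> Cplx) : R :=
  alpha0 * lpnorm p R_ (fun r => lpnorm q V (fun v => Cmod (G0 r v)))
         * lpnorm p S_ (fun s => lpnorm q V (fun v => Cmod (G0 v s))).

Definition mu_p (q : ext) (V : list nat) (alpha0 : R) (G0 : nat -> nat -> Cplx) : R :=
  alpha0 * Rmaxl V (fun v => lpnorm q V (fun w => Cmod (G0 v w))).

(** chain etas s x = (G0^{x;V} D_{eta_1} G0^{V;V} D_{eta_2} ... G0^{V;V} D_{eta_j} G0^{V;s})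
    for etas = [eta_1; ...; eta_j]  (and G0 x s for the empty list). *)
Fixpoint chain (V : list nat) (G0 : nat -> nat -> Cplx) (etas : list (nat -> Cplx))
    (s x : nat) : Cplx :=
  match etas with
  | [] => G0 x s
  | eta :: rest => Csum V (fun v => Cmul (Cmul (G0 x v) (eta v)) (chain V G0 rest s v))
  end.

Definition Kj (V : list nat) (alpha0 : R) (G0 : nat -> nat -> Cplx)
    (etas : list (nat -> Cplx)) (r s : nat) : Cplx :=
  Cmul (RtoC ((-1) ^ (S (length etas)) * alpha0 ^ (length etas)))
       (chain V G0 etas s r).

Fixpoint born_partial (V : list nat) (alpha0 : R) (G0 : nat -> nat -> Cplx)
    (eta : nat -> Cplx) (N : nat) (r s : nat) : Cplx :=
  match N with
  | O => C0
  | S n => Cadd (born_partial V alpha0 G0 eta n r s)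
                (Kj V alpha0 G0 (repeat eta (S n)) r s)
  end.

Definition kron (x y : nat) : Cplx := if Nat.eq_dec x y then C1 else C0.

(** A = I + alpha0 G0^{V;V} D_eta, entries on V x V *)
Definition Amat (alpha0 : R) (G0 : nat -> nat -> Cplx) (eta : nat -> Cplx) (x y : nat) : Cplx :=
  Cadd (kron x y) (Cmul (RtoC alpha0) (Cmul (G0 x y) (eta y))).

Definition is_inverse_on (V : list nat) (A M : nat -> nat -> Cplx) : Prop :=
  (forall x y, In x V -> In y V -> Csum V (fun z => Cmul (A x z) (M z y)) = kron x y) /\
  (forall x y, In x V -> In y V -> Csum V (fun z => Cmul (M x z) (A z y)) = kron x y).

(** Robin-to-Dirichlet map given the inverse M of I + alpha0 G0^{V;V} D_eta:
    Lambda(r,s) = G0(r,s) - alpha0 G0^{r;V} D_eta M G0^{V;s} *)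
Definition Lambda (V : list nat) (alpha0 : R) (G0 : nat -> nat -> Cplx) (eta : nat -> Cplx)
    (M : nat -> nat -> Cplx) (r s : nat) : Cplx :=
  Csub (G0 r s)
    (Cmul (RtoC alpha0)
       (Csum V (fun v => Cmul (Cmul (G0 r v) (eta v))
                              (Csum V (fun u => Cmul (M v u) (G0 u s)))))).

(* Main.v *)
Require Import Defs.
From Stdlib Require Import Reals List Lra Lia Psatz.
From Coquelicot Require Complex.
Import ListNotations.
Open Scope R_scope.

Ltac cunf := unfold Csub, Cadd, Copp, Cmul, RtoC, C0, C1 in *.
Ltac ceq := cunf; simpl; f_equal; ring.

Lemma Cadd_0_l z : Cadd C0 z = z.
Proof. destruct z; ceq. Qed.

Lemma Csum_ext_in {A} (l : list A) f g :
  (forall x, In x l -> f x = g x) -> Csum l f = Csum l g.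
Proof.
  induction l as [|a l IH]; intros H; simpl; auto.
  rewrite H by (left; auto). rewrite IH; auto. intros; apply H; right; auto.
Qed.

Lemma Csum_add {A} (l : list A) f g :
  Csum l (fun x => Cadd (f x) (g x)) = Cadd (Csum l f) (Csum l g).
Proof.
  induction l as [|a l IH]; simpl. ceq.
  rewrite IH. destruct (f a), (g a), (Csum l f), (Csum l g); ceq.
Qed.

Lemma Csum_sub {A} (l : list A) f g :
  Csum l (fun x => Csub (f x) (g x)) = Csub (Csum l f) (Csum l g).
Proof.
  induction l as [|a l IH]; simpl. ceq.
  rewrite IH. destruct (f a), (g a), (Csum l f), (Csum l g); ceq.
Qed.

Lemma Csum_mul_l {A} (l : list A) c f :
  Csum l (fun x => Cmul c (f x)) = Cmul c (Csum l f).
Proof.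
  induction l as [|a l IH]; simpl. destruct c; ceq.
  rewrite IH. destruct c, (f a), (Csum l f); ceq.
Qed.

Lemma Csum_mul_r {A} (l : list A) c f :
  Csum l (fun x => Cmul (f x) c) = Cmul (Csum l f) c.
Proof.
  induction l as [|a l IH]; simpl. destruct c; ceq.
  rewrite IH. destruct c, (f a), (Csum l f); ceq.
Qed.

Lemma Csum_zero {A} (l : list A) : Csum l (fun _ => C0) = C0.
Proof. induction l; simpl; auto. rewrite IHl; ceq. Qed.

Lemma Csum_swap {A B} (l1 : list A) (l2 : list B) f :
  Csum l1 (fun x => Csum l2 (fun y => f x y)) = Csum l2 (fun y => Csum l1 (fun x => f x y)).
Proof.
  induction l1 as [|a l IH]; simpl. rewrite Csum_zero; auto.
  rewrite IH. rewrite <- Csum_add. auto.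
Qed.

Lemma Csum_notin {A} (l : list A) f : (forall x, In x l -> f x = C0) -> Csum l f = C0.
Proof. intros H. rewrite (Csum_ext_in l f (fun _ => C0)); auto. apply Csum_zero. Qed.

Lemma kron_sum_l (l : list nat) x f : NoDup l -> In x l ->
  Csum l (fun z => Cmul (kron x z) (f z)) = f x.
Proof.
  induction l as [|a l IH]; intros Hn Hx; simpl; [destruct Hx|].
  inversion Hn as [|a' l' Ha Hn']; subst. unfold kron at 1. destruct (Nat.eq_dec x a) as [e|ne].
  - rewrite <- e in *. rewrite Csum_notin. destruct (f x); ceq.
    intros z Hz. unfold kron. destruct (Nat.eq_dec x z) as [e2|]. rewrite e2 in Ha; contradiction. destruct (f z); ceq.
  - destruct Hx as [Hx|Hx]. congruence. rewrite IH; auto. destruct (f a), (f x); ceq.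
Qed.

Lemma kron_sum_r (l : list nat) y f : NoDup l -> In y l ->
  Csum l (fun z => Cmul (f z) (kron z y)) = f y.
Proof.
  intros Hn Hy. rewrite <- (kron_sum_l l y f Hn Hy). apply Csum_ext_in.
  intros z _. unfold kron. destruct (f z) eqn:E.
  destruct (Nat.eq_dec z y), (Nat.eq_dec y z); try congruence; ceq.
Qed.

Lemma Cmod_add z w : Cmod (Cadd z w) <= Cmod z + Cmod w.
Proof. exact (Complex.Cmod_triangle z w). Qed.
Lemma Cmod_mul z w : Cmod (Cmul z w) = Cmod z * Cmod w.
Proof. exact (Complex.Cmod_mult z w). Qed.
Lemma Cmod_opp z : Cmod (Copp z) = Cmod z.
Proof. exact (Complex.Cmod_opp z). Qed.
Lemma Cmod_ge0 z : 0 <= Cmod z.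
Proof. exact (Complex.Cmod_ge_0 z). Qed.
Lemma Cmod_sub z w : Cmod (Csub z w) <= Cmod z + Cmod w.
Proof. unfold Csub. eapply Rle_trans. apply Cmod_add. rewrite Cmod_opp; lra. Qed.
Lemma Cmod_RtoC x : Cmod (RtoC x) = Rabs x.
Proof. exact (Complex.Cmod_R x). Qed.
Lemma Cmod_fst z : Rabs (fst z) <= Cmod z.
Proof. pose proof (Complex.Rmax_Cmod z). pose proof (Rmax_l (Rabs (fst z)) (Rabs (snd z))). change (Rabs (fst z) <= Complex.Cmod z); lra. Qed.
Lemma Cmod_snd z : Rabs (snd z) <= Cmod z.
Proof. pose proof (Complex.Rmax_Cmod z). pose proof (Rmax_r (Rabs (fst z)) (Rabs (snd z))). change (Rabs (snd z) <= Complex.Cmod z); lra. Qed.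

Definition Rsum_nonneg {A} (l : list A) f : (forall x, In x l -> 0 <= f x) -> 0 <= Rsum l f.
Proof.
  induction l as [|a l IH]; intros H; simpl. lra.
  pose proof (H a (or_introl eq_refl)). pose proof (IH (fun x Hx => H x (or_intror Hx))). lra.
Qed.

Lemma Rsum_le {A} (l : list A) f g : (forall x, In x l -> f x <= g x) -> Rsum l f <= Rsum l g.
Proof.
  induction l as [|a l IH]; intros H; simpl. lra.
  pose proof (H a (or_introl eq_refl)). pose proof (IH (fun x Hx => H x (or_intror Hx))). lra.
Qed.

Lemma Rsum_mul_l {A} (l : list A) c f : Rsum l (fun x => c * f x) = c * Rsum l f.
Proof. induction l; simpl; auto. ring. rewrite IHl; ring. Qed.

Lemma Rsum_app {A} (l1 l2 : list A) f : Rsum (l1 ++ l2) f = Rsum l1 f + Rsum l2 f.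
Proof. induction l1; simpl. ring. rewrite IHl1; ring. Qed.

Lemma Rsum_map {A B} (l : list A) (g : A -> B) f : Rsum (map g l) f = Rsum l (fun x => f (g x)).
Proof. induction l; simpl; auto. rewrite IHl; auto. Qed.

Lemma Rsum_prod {A B} (l1 : list A) (l2 : list B) f :
  Rsum (list_prod l1 l2) f = Rsum l1 (fun x => Rsum l2 (fun y => f (x, y))).
Proof. induction l1; simpl; auto. rewrite Rsum_app, Rsum_map, IHl1; auto. Qed.

Lemma Rsum_ge_elem {A} (l : list A) f x : (forall y, In y l -> 0 <= f y) -> In x l -> f x <= Rsum l f.
Proof.
  induction l as [|a l IH]; intros H Hx; simpl. destruct Hx.
  destruct Hx as [<-|Hx].
  - pose proof (Rsum_nonneg l f (fun y Hy => H y (or_intror Hy))). lra.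
  - pose proof (H a (or_introl eq_refl)). pose proof (IH (fun y Hy => H y (or_intror Hy)) Hx). lra.
Qed.

Lemma Rsum_zero_elem {A} (l : list A) f x : (forall y, In y l -> 0 <= f y) -> Rsum l f <= 0 -> In x l -> f x = 0.
Proof.
  intros H Hs Hx. pose proof (Rsum_ge_elem l f x H Hx). pose proof (H x Hx). lra.
Qed.

Lemma Cmod_Csum {A} (l : list A) f : Cmod (Csum l f) <= Rsum l (fun x => Cmod (f x)).
Proof.
  induction l; simpl. unfold C0. pose proof (Complex.Cmod_0). change (Complex.Cmod (0,0) <= 0). unfold Complex.Cmod in *. simpl in *. lra.
  eapply Rle_trans. apply Cmod_add. lra.
Qed.

Lemma Rmaxl_ge0 {A} (l : list A) f : 0 <= Rmaxl l f.
Proof. induction l; simpl. lra. eapply Rle_trans. apply IHl. apply Rmax_r. Qed.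

Lemma Rmaxl_ge {A} (l : list A) f x : In x l -> f x <= Rmaxl l f.
Proof.
  induction l as [|a l IH]; intros Hx; simpl. destruct Hx.
  destruct Hx as [<-|Hx]. apply Rmax_l. eapply Rle_trans. apply IH; auto. apply Rmax_r.
Qed.

Lemma Rmaxl_lub {A} (l : list A) f c : 0 <= c -> (forall x, In x l -> f x <= c) -> Rmaxl l f <= c.
Proof.
  induction l as [|a l IH]; intros Hc H; simpl. auto.
  apply Rmax_lub. apply H; left; auto. apply IH; auto. intros; apply H; right; auto.
Qed.



Lemma rpow_ge0 x a : 0 <= rpow x a.
Proof. unfold rpow. destruct (Rle_dec x 0). lra. unfold Rpower. left; apply exp_pos. Qed.

Lemma rpow_pos x a : 0 < x -> rpow x a = Rpower x a.
Proof. intros. unfold rpow. destruct (Rle_dec x 0). lra. auto. Qed.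

Lemma rpow_gt0 x a : 0 < x -> 0 < rpow x a.
Proof. intros. rewrite rpow_pos by auto. unfold Rpower; apply exp_pos. Qed.

Lemma rpow_le0 x a : x <= 0 -> rpow x a = 0.
Proof. intros. unfold rpow. destruct (Rle_dec x 0). auto. lra. Qed.

Lemma rpow_mult x y a : 0 <= x -> 0 <= y -> rpow (x * y) a = rpow x a * rpow y a.
Proof.
  intros Hx Hy. destruct (Req_dec x 0) as [->|nx]. rewrite Rmult_0_l, rpow_le0 by lra. ring.
  destruct (Req_dec y 0) as [->|ny]. rewrite Rmult_0_r, (rpow_le0 0) by lra. ring.
  rewrite !rpow_pos by nra. symmetry; apply Rpower_mult_distr; lra.
Qed.

Lemma rpow_rpow x a b : 0 <= x -> rpow (rpow x a) b = rpow x (a * b).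
Proof.
  intros Hx. destruct (Req_dec x 0) as [->|nx]. rewrite !(rpow_le0 0) by lra; reflexivity.
  rewrite (rpow_pos x) by lra. rewrite rpow_pos. rewrite rpow_pos by lra. apply Rpower_mult.
  unfold Rpower; apply exp_pos.
Qed.

Lemma rpow_1 x : 0 <= x -> rpow x 1 = x.
Proof. intros. destruct (Req_dec x 0) as [->|nx]. apply rpow_le0; lra. rewrite rpow_pos by lra. apply Rpower_1; lra. Qed.

Lemma rpow_inv x a : 0 <= x -> a <> 0 -> rpow (rpow x a) (/ a) = x.
Proof. intros. rewrite rpow_rpow by auto. rewrite Rinv_r by auto. apply rpow_1; auto. Qed.

Lemma rpow_le x y a : 0 <= x -> x <= y -> 0 < a -> rpow x a <= rpow y a.
Proof.
  intros Hx Hxy Ha. destruct (Req_dec x 0) as [->|nx]. rewrite rpow_le0 by lra. apply rpow_ge0.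
  rewrite !rpow_pos by lra. apply Rle_Rpower_l; lra.
Qed.

Lemma rpow_nonpos x a : 0 <= x -> rpow x a <= 0 -> x = 0.
Proof. intros Hx H. destruct (Req_dec x 0); auto. pose proof (rpow_gt0 x a). lra. Qed.

Lemma rpow_Rinv x a : 0 < x -> rpow (/ x) a = / rpow x a.
Proof.
  intros Hx. rewrite !rpow_pos; auto. unfold Rpower. rewrite ln_Rinv by auto.
  replace (a * - ln x) with (- (a * ln x)) by ring. apply exp_Ropp. apply Rinv_0_lt_compat; auto.
Qed.

Lemma exp_convex t u v : 0 <= t <= 1 -> exp (t * u + (1 - t) * v) <= t * exp u + (1 - t) * exp v.
Proof.
  intros Ht. set (m := t * u + (1 - t) * v).
  assert (Eu : exp u = exp m * exp (u - m)) by (rewrite <- exp_plus; f_equal; ring).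
  assert (Ev : exp v = exp m * exp (v - m)) by (rewrite <- exp_plus; f_equal; ring).
  pose proof (exp_ineq1_le (u - m)). pose proof (exp_ineq1_le (v - m)). pose proof (exp_pos m).
  rewrite Eu, Ev.
  assert (t * (exp m * (1 + (u - m))) + (1 - t) * (exp m * (1 + (v - m))) = exp m) by (unfold m; ring).
  assert (0 <= t * exp m) by nra. assert (0 <= (1 - t) * exp m) by nra.
  assert (t * exp m * (1 + (u - m)) <= t * exp m * exp (u - m)) by (apply Rmult_le_compat_l; lra).
  assert ((1 - t) * exp m * (1 + (v - m)) <= (1 - t) * exp m * exp (v - m)) by (apply Rmult_le_compat_l; lra).
  nra.
Qed.

Lemma young x y a b : 0 <= x -> 0 <= y -> 1 < a -> 1 < b -> / a + / b = 1 ->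
  x * y <= rpow x a / a + rpow y b / b.
Proof.
  intros Hx Hy Ha Hb Hab.
  assert (0 <= rpow x a / a) by (apply Rmult_le_pos; [apply rpow_ge0| left; apply Rinv_0_lt_compat; lra]).
  assert (0 <= rpow y b / b) by (apply Rmult_le_pos; [apply rpow_ge0| left; apply Rinv_0_lt_compat; lra]).
  destruct (Req_dec x 0) as [->|nx]. lra. destruct (Req_dec y 0) as [->|ny]. lra.
  rewrite !rpow_pos by lra. unfold Rpower.
  assert (E : x * y = exp (/ a * (a * ln x) + (1 - / a) * (b * ln y))).
  { replace (1 - / a) with (/ b) by lra.
    replace (/ a * (a * ln x) + / b * (b * ln y)) with (ln x + ln y) by (field; lra).
    rewrite exp_plus, !exp_ln by lra. auto. }
  rewrite E. eapply Rle_trans. apply exp_convex.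
  split; [left; apply Rinv_0_lt_compat; lra|]. assert (/ a < 1) by (rewrite <- Rinv_1; apply Rinv_lt_contravar; lra). lra.
  replace (1 - / a) with (/ b) by lra. unfold Rdiv. lra.
Qed.


Lemma Rsum_add {A} (l : list A) f g : Rsum l (fun x => f x + g x) = Rsum l f + Rsum l g.
Proof. induction l; simpl. ring. rewrite IHl; ring. Qed.

Lemma Rsum_ext_in {A} (l : list A) f g : (forall x, In x l -> f x = g x) -> Rsum l f = Rsum l g.
Proof. intros H. apply Rle_antisym; apply Rsum_le; intros x Hx; rewrite H; auto; lra. Qed.

Lemma Rsum_zero {A} (l : list A) : Rsum l (fun _ => 0) = 0.
Proof. induction l; simpl; auto. rewrite IHl; ring. Qed.

Lemma holder_fin {A} (l : list A) f g a b : 1 < a -> 1 < b -> / a + / b = 1 ->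
  (forall x, In x l -> 0 <= f x) -> (forall x, In x l -> 0 <= g x) ->
  Rsum l (fun x => f x * g x) <= lpnorm (Fin a) l f * lpnorm (Fin b) l g.
Proof.
  intros Ha Hb Hab Hf Hg. simpl.
  set (Sa := Rsum l (fun x => rpow (f x) a)). set (Sb := Rsum l (fun x => rpow (g x) b)).
  assert (HSa : 0 <= Sa) by (apply Rsum_nonneg; intros; apply rpow_ge0).
  assert (HSb : 0 <= Sb) by (apply Rsum_nonneg; intros; apply rpow_ge0).
  assert (Hz : Rsum l (fun x => f x * g x) = 0 \/ (0 < Sa /\ 0 < Sb)).
  { destruct (Req_dec Sa 0) as [E|E].
    - left. rewrite (Rsum_ext_in l _ (fun _ => 0)). rewrite Rsum_zero. ring. intros x Hx. assert (rpow (f x) a = 0). apply (Rsum_zero_elem l (fun x => rpow (f x) a)); auto.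
      intros; apply rpow_ge0. fold Sa; lra. rewrite (rpow_nonpos (f x) a); [ring| apply Hf; auto| lra].
    - destruct (Req_dec Sb 0) as [E2|E2].
      + left. rewrite (Rsum_ext_in l _ (fun _ => 0)). rewrite Rsum_zero. ring. intros x Hx. assert (rpow (g x) b = 0). apply (Rsum_zero_elem l (fun x => rpow (g x) b)); auto.
      intros; apply rpow_ge0. fold Sb; lra. rewrite (rpow_nonpos (g x) b); [ring| apply Hg; auto| lra].
      + right; lra. }
  destruct Hz as [Hz|[Pa Pb]].
  { rewrite Hz. apply Rmult_le_pos; apply rpow_ge0. }
  set (NA := rpow Sa (/ a)). set (NB := rpow Sb (/ b)).
  assert (PA : 0 < NA) by (apply rpow_gt0; auto). assert (PB : 0 < NB) by (apply rpow_gt0; auto).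
  assert (EA : rpow NA a = Sa) by (unfold NA; rewrite rpow_rpow by lra; rewrite Rinv_l by lra; apply rpow_1; lra).
  assert (EB : rpow NB b = Sb) by (unfold NB; rewrite rpow_rpow by lra; rewrite Rinv_l by lra; apply rpow_1; lra).
  eapply Rle_trans with (Rsum l (fun x => NA * NB * (/ (a * Sa)) * rpow (f x) a + NA * NB * (/ (b * Sb)) * rpow (g x) b)).
  - apply Rsum_le. intros x Hx.
    pose proof (young (f x / NA) (g x / NB) a b) as Y.
    assert (0 <= f x / NA) by (apply Rmult_le_pos; [apply Hf; auto| left; apply Rinv_0_lt_compat; auto]).
    assert (0 <= g x / NB) by (apply Rmult_le_pos; [apply Hg; auto| left; apply Rinv_0_lt_compat; auto]).
    specialize (Y H H0 Ha Hb Hab).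
    unfold Rdiv in Y. rewrite !rpow_mult in Y; try (apply Hf; auto); try (apply Hg; auto);
      try (left; apply Rinv_0_lt_compat; auto).
    rewrite !rpow_Rinv in Y by auto. rewrite EA, EB in Y.
    replace (f x * g x) with (NA * NB * (f x * / NA * (g x * / NB))) by (field; lra).
    eapply Rle_trans. apply Rmult_le_compat_l. nra. exact Y.
    right. field. lra.
  - rewrite Rsum_add, !Rsum_mul_l. fold Sa Sb.
    replace (NA * NB * / (a * Sa) * Sa + NA * NB * / (b * Sb) * Sb) with (NA * NB * (/ a + / b)) by (field; lra).
    rewrite Hab. lra.
Qed.

Definition expok (p : ext) : Prop := match p with Fin a => 0 < a | Infty => True end.

Lemma conj_expok p q : conj_exp p q -> expok p /\ expok q.
Proof. destruct p, q; simpl; intros; lra. Qed.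

Lemma lpnorm_ge0 {A} p (l : list A) f : 0 <= lpnorm p l f.
Proof. destruct p; simpl. apply rpow_ge0. apply Rmaxl_ge0. Qed.

Lemma lpnorm_mono {A} p (l : list A) f g : expok p ->
  (forall x, In x l -> 0 <= f x <= g x) -> lpnorm p l f <= lpnorm p l g.
Proof.
  intros Hp H. destruct p as [a|]; simpl in *.
  - apply rpow_le. apply Rsum_nonneg; intros; apply rpow_ge0.
    apply Rsum_le; intros x Hx; destruct (H x Hx); apply rpow_le; auto.
    apply Rinv_0_lt_compat; auto.
  - apply Rmaxl_lub. apply Rmaxl_ge0. intros x Hx. eapply Rle_trans. apply H; auto. apply Rmaxl_ge; auto.
Qed.

Lemma lpnorm_homog {A} p (l : list A) c f : expok p -> 0 <= c ->
  (forall x, In x l -> 0 <= f x) -> lpnorm p l (fun x => c * f x) = c * lpnorm p l f.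
Proof.
  intros Hp Hc H. destruct p as [a|]; simpl in *.
  - rewrite (Rsum_ext_in l _ (fun x => rpow c a * rpow (f x) a)).
    rewrite Rsum_mul_l. rewrite rpow_mult. rewrite rpow_inv; auto. lra. apply rpow_ge0.
    apply Rsum_nonneg; intros; apply rpow_ge0.
    intros x Hx. apply rpow_mult; auto.
  - clear H. induction l; simpl. ring. rewrite IHl. apply RmaxRmult; auto.
Qed.

Lemma lpnorm_ge_elem {A} p (l : list A) f x : expok p ->
  (forall y, In y l -> 0 <= f y) -> In x l -> f x <= lpnorm p l f.
Proof.
  intros Hp H Hx. destruct p as [a|]; simpl in *.
  - rewrite <- (rpow_inv (f x) a) by (auto; lra). apply rpow_le. apply rpow_ge0.
    apply (Rsum_ge_elem l (fun y => rpow (f y) a)); auto. intros; apply rpow_ge0.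
    apply Rinv_0_lt_compat; auto.
  - apply Rmaxl_ge; auto.
Qed.

Lemma lpnorm_fin1 {A} (l : list A) g : (forall x, In x l -> 0 <= g x) ->
  lpnorm (Fin 1) l g = Rsum l g.
Proof.
  intros H. simpl. rewrite Rinv_1. rewrite rpow_1.
  apply Rsum_ext_in; intros; apply rpow_1; auto.
  apply Rsum_nonneg; intros; apply rpow_ge0.
Qed.

Lemma holder {A} p q (l : list A) f g : conj_exp p q ->
  (forall x, In x l -> 0 <= f x) -> (forall x, In x l -> 0 <= g x) ->
  Rsum l (fun x => f x * g x) <= lpnorm q l f * lpnorm p l g.
Proof.
  intros Hpq Hf Hg. destruct p as [a|], q as [b|]; simpl in Hpq.
  - apply holder_fin; auto; lra.
  - subst a. rewrite lpnorm_fin1 by auto. simpl.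
    rewrite <- Rsum_mul_l. apply Rsum_le; intros x Hx.
    apply Rmult_le_compat_r. apply Hg; auto. apply Rmaxl_ge; auto.
  - subst b. rewrite lpnorm_fin1 by auto. simpl.
    rewrite Rmult_comm, <- Rsum_mul_l. apply Rsum_le; intros x Hx.
    rewrite Rmult_comm. apply Rmult_le_compat_r. apply Hf; auto. apply Rmaxl_ge; auto.
  - contradiction.
Qed.

Lemma lpnorm_prod {A B} p (l1 : list A) (l2 : list B) F G : expok p ->
  (forall x, In x l1 -> 0 <= F x) -> (forall y, In y l2 -> 0 <= G y) ->
  lpnorm p (list_prod l1 l2) (fun rs => F (fst rs) * G (snd rs)) <= lpnorm p l1 F * lpnorm p l2 G.
Proof.
  intros Hp HF HG. destruct p as [a|]; simpl in *.
  - rewrite Rsum_prod. simpl.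
    rewrite (Rsum_ext_in l1 _ (fun x => rpow (F x) a * Rsum l2 (fun y => rpow (G y) a))).
    rewrite (Rsum_ext_in l1 _ (fun x => Rsum l2 (fun y => rpow (G y) a) * rpow (F x) a)) by (intros; ring).
    rewrite Rsum_mul_l, Rmult_comm.
    rewrite rpow_mult. lra. apply Rsum_nonneg; intros; apply rpow_ge0.
    apply Rsum_nonneg; intros; apply rpow_ge0.
    intros x Hx. rewrite <- Rsum_mul_l. apply Rsum_ext_in. intros y Hy. apply rpow_mult; auto.
  - apply Rmaxl_lub. apply Rmult_le_pos; apply Rmaxl_ge0.
    intros [x y] Hxy. apply in_prod_iff in Hxy. destruct Hxy as [Hx Hy]. simpl.
    apply Rmult_le_compat; auto. apply Rmaxl_ge; auto. apply Rmaxl_ge; auto.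
Qed.


Definition Ccv (u : nat -> Cplx) (l : Cplx) : Prop :=
  Un_cv (fun n => fst (u n)) (fst l) /\ Un_cv (fun n => snd (u n)) (snd l).

Lemma Un_cv_const c : Un_cv (fun _ => c) c.
Proof. intros eps He. exists 0%nat. intros. unfold R_dist. rewrite Rminus_diag, Rabs_R0. auto. Qed.

Lemma Un_cv_ext u v l : (forall n, u n = v n) -> Un_cv u l -> Un_cv v l.
Proof. intros E H eps He. destruct (H eps He) as [N HN]. exists N. intros n Hn. rewrite <- E. auto. Qed.

Lemma Ccv_ext u v l : (forall n, u n = v n) -> Ccv u l -> Ccv v l.
Proof. intros E [H1 H2]. split; eapply Un_cv_ext; eauto; intros; simpl; rewrite E; auto. Qed.

Lemma Ccv_const c : Ccv (fun _ => c) c.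
Proof. split; apply Un_cv_const. Qed.

Lemma Ccv_add u v a b : Ccv u a -> Ccv v b -> Ccv (fun n => Cadd (u n) (v n)) (Cadd a b).
Proof. intros [H1 H2] [H3 H4]. split; simpl; apply CV_plus; auto. Qed.

Lemma Ccv_opp u a : Ccv u a -> Ccv (fun n => Copp (u n)) (Copp a).
Proof. intros [H1 H2]. split; simpl; apply (CV_opp _ _ H1) || apply (CV_opp _ _ H2). Qed.

Lemma Ccv_sub u v a b : Ccv u a -> Ccv v b -> Ccv (fun n => Csub (u n) (v n)) (Csub a b).
Proof. intros. apply Ccv_add; auto. apply Ccv_opp; auto. Qed.

Lemma Ccv_mul u v a b : Ccv u a -> Ccv v b -> Ccv (fun n => Cmul (u n) (v n)) (Cmul a b).
Proof.
  intros [H1 H2] [H3 H4]. split; simpl.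
  - apply (CV_plus _ _ _ _ (CV_mult _ _ _ _ H1 H3)). apply (CV_opp _ _ (CV_mult _ _ _ _ H2 H4)).
  - apply CV_plus; apply CV_mult; auto.
Qed.

Lemma Ccv_Csum {A} (l : list A) (u : nat -> A -> Cplx) (w : A -> Cplx) :
  (forall x, In x l -> Ccv (fun n => u n x) (w x)) -> Ccv (fun n => Csum l (u n)) (Csum l w).
Proof.
  induction l as [|a l IH]; intros H; simpl. apply Ccv_const.
  apply Ccv_add. apply H; left; auto. apply IH; intros; apply H; right; auto.
Qed.

Lemma Ccv_unique u a b : Ccv u a -> Ccv u b -> a = b.
Proof.
  intros [H1 H2] [H3 H4]. destruct a, b; simpl in *. f_equal; eapply UL_sequence; eauto.
Qed.

Lemma pow_decr t n k : 0 <= t <= 1 -> t ^ (n + k) <= t ^ n.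
Proof.
  intros Ht. induction k. rewrite Nat.add_0_r; lra.
  rewrite Nat.add_succ_r. simpl. pose proof (pow_le t (n + k) (proj1 Ht)). nra.
Qed.

Lemma geom_small t C eps : 0 <= t < 1 -> 0 <= C -> 0 < eps -> exists N, forall n, (n >= N)%nat -> C * t ^ n < eps.
Proof.
  intros Ht HC He. destruct (pow_lt_1_zero t) with (y := eps / (C + 1)) as [N HN].
  rewrite Rabs_right; lra. apply Rdiv_lt_0_compat; lra.
  exists N. intros n Hn. specialize (HN n Hn). rewrite Rabs_right in HN by (apply Rle_ge, pow_le; lra).
  assert (C * t ^ n <= C * (eps / (C + 1))) by (apply Rmult_le_compat_l; lra).
  assert (C * (eps / (C + 1)) < eps). { replace (C * (eps / (C + 1))) with (eps - eps / (C + 1)) by (field; lra).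
    assert (0 < eps / (C + 1)) by (apply Rdiv_lt_0_compat; lra). lra. }
  lra.
Qed.

Lemma Ccv_zero_bound u t C : 0 <= t < 1 -> 0 <= C -> (forall n, Cmod (u n) <= C * t ^ n) -> Ccv u C0.
Proof.
  intros Ht HC H. split; intros eps He; destruct (geom_small t C eps Ht HC He) as [N HN];
  exists N; intros n Hn; unfold R_dist; simpl; rewrite Rminus_0_r;
  eapply Rle_lt_trans; try apply (HN n Hn); eapply Rle_trans; try apply (H n).
  apply Cmod_fst. apply Cmod_snd.
Qed.

Definition Top (V : list nat) (alpha0 : R) (G0 : nat -> nat -> Cplx) (eta : nat -> Cplx)
  (x : nat) (w : nat -> Cplx) : Cplx :=
  Cmul (RtoC alpha0) (Csum V (fun u => Cmul (Cmul (G0 x u) (eta u)) (w u))).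

Lemma Top_ext V a G e x w1 w2 : (forall u, In u V -> w1 u = w2 u) -> Top V a G e x w1 = Top V a G e x w2.
Proof. intros H. unfold Top. f_equal. apply Csum_ext_in. intros; rewrite H; auto. Qed.

Lemma Top_add V a G e x w1 w2 : Top V a G e x (fun u => Cadd (w1 u) (w2 u)) = Cadd (Top V a G e x w1) (Top V a G e x w2).
Proof.
  unfold Top.
  rewrite (Csum_ext_in V (fun u => Cmul (Cmul (G x u) (e u)) (Cadd (w1 u) (w2 u)))
     (fun u => Cadd (Cmul (Cmul (G x u) (e u)) (w1 u)) (Cmul (Cmul (G x u) (e u)) (w2 u)))).
  rewrite Csum_add. destruct (Csum V _), (Csum V _); ceq.
  intros u _. destruct (G x u), (e u), (w1 u), (w2 u); ceq.
Qed.

Lemma Top_opp V a G e x w : Top V a G e x (fun u => Copp (w u)) = Copp (Top V a G e x w).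
Proof.
  unfold Top. rewrite (Csum_ext_in V _ (fun u => Cmul (RtoC (-1)) (Cmul (Cmul (G x u) (e u)) (w u)))).
  rewrite Csum_mul_l. destruct (Csum V _); ceq.
  intros u _. destruct (G x u), (e u), (w u); ceq.
Qed.

Lemma Top_sub V a G e x w1 w2 : Top V a G e x (fun u => Csub (w1 u) (w2 u)) = Csub (Top V a G e x w1) (Top V a G e x w2).
Proof. unfold Csub at 1. rewrite Top_add, Top_opp. auto. Qed.

Lemma Top_zero V a G e x : Top V a G e x (fun _ => C0) = C0.
Proof.
  unfold Top. rewrite (Csum_ext_in V _ (fun _ => C0)). rewrite Csum_zero. ceq.
  intros u _. destruct (G x u), (e u); ceq.
Qed.

Lemma Top_scal V a G e x c w : Top V a G e x (fun u => Cmul c (w u)) = Cmul c (Top V a G e x w).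
Proof.
  unfold Top. rewrite (Csum_ext_in V _ (fun u => Cmul c (Cmul (Cmul (G x u) (e u)) (w u)))).
  rewrite Csum_mul_l. destruct (Csum V _), c; ceq.
  intros u _. destruct (G x u), (e u), (w u), c; ceq.
Qed.

Lemma Tbound V a G e p q x w X : conj_exp p q -> 0 <= a -> 0 <= X ->
  (forall u, In u V -> Cmod (w u) <= X) ->
  Cmod (Top V a G e x w) <= a * lpnorm q V (fun v => Cmod (G x v)) * lpnorm p V (fun v => Cmod (e v)) * X.
Proof.
  intros Hpq Ha HX H. destruct (conj_expok p q Hpq) as [Hp Hq].
  unfold Top. rewrite Cmod_mul, Cmod_RtoC, Rabs_right by lra.
  rewrite !Rmult_assoc. apply Rmult_le_compat_l; auto.
  eapply Rle_trans. apply Cmod_Csum.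
  eapply Rle_trans with (Rsum V (fun u => Cmod (G x u) * (X * Cmod (e u)))).
  { apply Rsum_le. intros u Hu. rewrite !Cmod_mul. pose proof (H u Hu). pose proof (Cmod_ge0 (G x u)).
    pose proof (Cmod_ge0 (e u)). pose proof (Cmod_ge0 (w u)).
    assert (Cmod (e u) * Cmod (w u) <= Cmod (e u) * X) by (apply Rmult_le_compat_l; auto).
    assert (Cmod (G x u) * (Cmod (e u) * Cmod (w u)) <= Cmod (G x u) * (Cmod (e u) * X)) by (apply Rmult_le_compat_l; auto).
    nra. }
  eapply Rle_trans. apply (holder p q V). auto. intros; apply Cmod_ge0.
  intros; apply Rmult_le_pos; auto; apply Cmod_ge0.
  rewrite lpnorm_homog; auto. right; ring. intros; apply Cmod_ge0.
Qed.


Fixpoint Pw V a G e (k : nat) (x y : nat) : Cplx :=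
  match k with
  | O => kron x y
  | S k => Copp (Top V a G e x (fun z => Pw V a G e k z y))
  end.

Fixpoint SS V a G e (N : nat) (x y : nat) : Cplx :=
  match N with
  | O => C0
  | S N => Cadd (SS V a G e N x y) (Pw V a G e N x y)
  end.

Definition Rm (a : R) G (e : nat -> Cplx) (z y : nat) : Cplx := Copp (Cmul (RtoC a) (Cmul (G z y) (e y))).

Lemma A_apply V a G e x w : NoDup V -> In x V ->
  Csum V (fun z => Cmul (Amat a G e x z) (w z)) = Cadd (w x) (Top V a G e x w).
Proof.
  intros Hn Hx. unfold Amat, Top.
  rewrite (Csum_ext_in V _ (fun z => Cadd (Cmul (kron x z) (w z)) (Cmul (RtoC a) (Cmul (Cmul (G x z) (e z)) (w z))))).
  rewrite Csum_add, kron_sum_l, Csum_mul_l; auto.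
  intros z _. destruct (kron x z), (G x z), (e z), (w z); ceq.
Qed.

Lemma A_apply_r V a G e y w : NoDup V -> In y V ->
  Csum V (fun z => Cmul (w z) (Amat a G e z y)) = Csub (w y) (Csum V (fun z => Cmul (w z) (Rm a G e z y))).
Proof.
  intros Hn Hy. unfold Amat, Rm.
  rewrite (Csum_ext_in V _ (fun z => Csub (Cmul (w z) (kron z y)) (Cmul (w z) (Copp (Cmul (RtoC a) (Cmul (G z y) (e y))))))).
  rewrite Csum_sub, kron_sum_r; auto.
  intros z _. destruct (kron z y), (G z y), (e y), (w z); ceq.
Qed.

Lemma AS V a G e N x y : NoDup V -> In x V ->
  Csum V (fun z => Cmul (Amat a G e x z) (SS V a G e N z y)) = Csub (kron x y) (Pw V a G e N x y).
Proof.
  intros Hn Hx. rewrite A_apply by auto. induction N.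
  - simpl. rewrite Top_zero. destruct (kron x y); ceq.
  - simpl. rewrite (Top_add V a G e x (fun z => SS V a G e N z y) (fun z => Pw V a G e N z y)).
    revert IHN. generalize (Top V a G e x (fun z => SS V a G e N z y)).
    generalize (Top V a G e x (fun z => Pw V a G e N z y)).
    intros c1 c2 IH. destruct (SS V a G e N x y) as [s1 s2], (Pw V a G e N x y) as [p1 p2], (kron x y) as [k1 k2], c1, c2.
    cunf. simpl in *. injection IH; intros. f_equal; lra.
Qed.

Lemma P_right V a G e k x y : NoDup V -> In x V -> In y V ->
  Pw V a G e (S k) x y = Csum V (fun z => Cmul (Pw V a G e k x z) (Rm a G e z y)).
Proof.
  intros Hn Hx Hy. revert x Hx. induction k; intros x Hx.
  - simpl. rewrite kron_sum_l by auto. unfold Top.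
    rewrite (kron_sum_r V y (fun z => Cmul (G x z) (e z))) by auto. unfold Rm. auto.
  - simpl Pw at 1.
    rewrite (Top_ext V a G e x _ (fun z => Csum V (fun w => Cmul (Pw V a G e k z w) (Rm a G e w y)))).
    2:{ intros u Hu. apply IHk; auto. }
    unfold Top.
    rewrite (Csum_ext_in V (fun u => Cmul (Cmul (G x u) (e u)) (Csum V (fun w => Cmul (Pw V a G e k u w) (Rm a G e w y))))
       (fun u => Csum V (fun w => Cmul (Cmul (Cmul (G x u) (e u)) (Pw V a G e k u w)) (Rm a G e w y)))).
    2:{ intros u _. rewrite <- Csum_mul_l. apply Csum_ext_in. intros w _.
        destruct (G x u), (e u), (Pw V a G e k u w), (Rm a G e w y); ceq. }
    rewrite Csum_swap.
    rewrite (Csum_ext_in V (fun w => Cmul (Pw V a G e (S k) x w) (Rm a G e w y))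
       (fun w => Cmul (Copp (RtoC a)) (Csum V (fun u => Cmul (Cmul (Cmul (G x u) (e u)) (Pw V a G e k u w)) (Rm a G e w y))))).
    2:{ intros w _. simpl Pw. unfold Top. rewrite Csum_mul_r. destruct (Csum V _), (Rm a G e w y); ceq. }
    rewrite Csum_mul_l. destruct (Csum V _); ceq.
Qed.

Lemma SA V a G e N x y : NoDup V -> In x V -> In y V ->
  Csum V (fun z => Cmul (SS V a G e N x z) (Amat a G e z y)) = Csub (kron x y) (Pw V a G e N x y).
Proof.
  intros Hn Hx Hy. induction N.
  - simpl. rewrite Csum_notin. destruct (kron x y); ceq. intros z _. destruct (Amat a G e z y); ceq.
  - simpl. rewrite (Csum_ext_in V _ (fun z => Cadd (Cmul (SS V a G e N x z) (Amat a G e z y)) (Cmul (Pw V a G e N x z) (Amat a G e z y)))).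
    2:{ intros z _. destruct (SS V a G e N x z), (Pw V a G e N x z), (Amat a G e z y); ceq. }
    rewrite Csum_add, IHN. rewrite (A_apply_r V a G e y (fun z => Pw V a G e N x z)) by auto.
    rewrite <- P_right by auto. simpl Pw.
    destruct (kron x y), (Pw V a G e N x y), (Top _ _ _ _ _ _); ceq.
Qed.

Lemma mu_bound V a G q x : 0 <= a -> In x V ->
  a * lpnorm q V (fun v => Cmod (G x v)) <= mu_p q V a G.
Proof.
  intros Ha Hx. unfold mu_p. apply Rmult_le_compat_l; auto.
  apply (Rmaxl_ge V (fun v => lpnorm q V (fun w => Cmod (G v w)))); auto.
Qed.

Lemma Cmod_C0 : Cmod C0 = 0.
Proof. exact Complex.Cmod_0. Qed.
Lemma Cmod_C1 : Cmod Defs.C1 = 1.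
Proof. exact Complex.Cmod_1. Qed.

Lemma Pw_bound V a G e p q : conj_exp p q -> 0 <= a ->
  forall k x y, In x V ->
  Cmod (Pw V a G e k x y) <= (mu_p q V a G * lpnorm p V (fun v => Cmod (e v))) ^ k.
Proof.
  intros Hpq Ha. assert (0 <= mu_p q V a G) by (unfold mu_p; apply Rmult_le_pos; auto; apply Rmaxl_ge0).
  assert (0 <= lpnorm p V (fun v => Cmod (e v))) by apply lpnorm_ge0.
  induction k; intros x y Hx.
  - simpl. unfold kron. destruct (Nat.eq_dec x y). rewrite Cmod_C1; lra. rewrite Cmod_C0; lra.
  - simpl Pw. rewrite Cmod_opp.
    assert (0 <= (mu_p q V a G * lpnorm p V (fun v => Cmod (e v))) ^ k) by (apply pow_le; apply Rmult_le_pos; auto).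
    eapply Rle_trans. apply (Tbound V a G e p q x _ ((mu_p q V a G * lpnorm p V (fun v => Cmod (e v))) ^ k)); auto.
    pose proof (mu_bound V a G q x Ha Hx). simpl.
    assert (0 <= (mu_p q V a G * lpnorm p V (fun v => Cmod (e v))) ^ k) by (apply pow_le; apply Rmult_le_pos; auto).
    assert (a * lpnorm q V (fun v => Cmod (G x v)) * lpnorm p V (fun v => Cmod (e v)) <= mu_p q V a G * lpnorm p V (fun v => Cmod (e v))) by (apply Rmult_le_compat_r; auto).
    nra.
Qed.

Lemma Csub_self z : Csub z z = C0.
Proof. destruct z; ceq. Qed.

Lemma SS_diff V a G e p q x y m d : conj_exp p q -> 0 <= a -> In x V ->
  mu_p q V a G * lpnorm p V (fun v => Cmod (e v)) < 1 ->
  Cmod (Csub (SS V a G e (m + d) x y) (SS V a G e m x y)) <=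
   ((mu_p q V a G * lpnorm p V (fun v => Cmod (e v))) ^ m - (mu_p q V a G * lpnorm p V (fun v => Cmod (e v))) ^ (m + d))
   / (1 - mu_p q V a G * lpnorm p V (fun v => Cmod (e v))).
Proof.
  intros Hpq Ha Hx Ht. set (t := mu_p q V a G * lpnorm p V (fun v => Cmod (e v))) in *.
  induction d.
  - rewrite Nat.add_0_r, Csub_self, Cmod_C0, Rminus_diag. unfold Rdiv; lra.
  - rewrite Nat.add_succ_r. simpl SS.
    replace (Csub (Cadd (SS V a G e (m + d) x y) (Pw V a G e (m + d) x y)) (SS V a G e m x y))
      with (Cadd (Csub (SS V a G e (m + d) x y) (SS V a G e m x y)) (Pw V a G e (m + d) x y))
      by (destruct (SS V a G e (m + d) x y), (Pw V a G e (m + d) x y), (SS V a G e m x y); ceq).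
    eapply Rle_trans. apply Cmod_add. pose proof (Pw_bound V a G e p q Hpq Ha (m + d) x y Hx). fold t in H.
    replace ((t ^ m - t ^ S (m + d)) / (1 - t)) with ((t ^ m - t ^ (m + d)) / (1 - t) + t ^ (m + d))
      by (simpl; field; lra). lra.
Qed.

Lemma cauchy_gen (u : nat -> Cplx) C t : 0 <= t < 1 -> 0 <= C ->
  (forall m d, Cmod (Csub (u (m + d)%nat) (u m)) <= C * t ^ m) ->
  Cauchy_crit (fun n => fst (u n)) /\ Cauchy_crit (fun n => snd (u n)).
Proof.
  intros Ht HC H.
  assert (K : forall eps, 0 < eps -> exists N, forall n m, (n >= N)%nat -> (m >= N)%nat ->
             Cmod (Csub (u n) (u m)) < eps).
  { intros eps He. destruct (geom_small t C eps Ht HC He) as [N HN]. exists N. intros n m Hn Hm.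
    destruct (Nat.le_ge_cases m n) as [Hmn|Hmn].
    - replace n with (m + (n - m))%nat by lia. eapply Rle_lt_trans. apply H. apply HN; auto.
    - replace m with (n + (m - n))%nat by lia.
      replace (Csub (u n) (u (n + (m - n))%nat)) with (Copp (Csub (u (n + (m - n))%nat) (u n)))
        by (destruct (u n), (u (n + (m - n))%nat); ceq).
      rewrite Cmod_opp. eapply Rle_lt_trans. apply H. apply HN; auto. }
  split; intros eps He; destruct (K eps He) as [N HN]; exists N; intros n m Hn Hm;
    unfold R_dist; eapply Rle_lt_trans; try apply (HN n m Hn Hm).
  apply (Cmod_fst (Csub (u n) (u m))). apply (Cmod_snd (Csub (u n) (u m))).
Qed.

Lemma limit_exists V a G e p q x y : conj_exp p q -> 0 <= a -> In x V ->
  mu_p q V a G * lpnorm p V (fun v => Cmod (e v)) < 1 ->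
  { l | Ccv (fun n => SS V a G e n x y) l }.
Proof.
  intros Hpq Ha Hx Ht.
  set (t := mu_p q V a G * lpnorm p V (fun v => Cmod (e v))) in *.
  assert (Ht0 : 0 <= t) by (unfold t, mu_p; repeat apply Rmult_le_pos; auto; try apply Rmaxl_ge0; apply lpnorm_ge0).
  assert (HC : forall m d, Cmod (Csub (SS V a G e (m + d) x y) (SS V a G e m x y)) <= / (1 - t) * t ^ m).
  { intros m d. eapply Rle_trans. apply (SS_diff V a G e p q); auto.
    fold t. pose proof (pow_le t (m + d) Ht0). unfold Rdiv.
    rewrite Rmult_comm. apply Rmult_le_compat_l. left; apply Rinv_0_lt_compat; lra. lra. }
  destruct (cauchy_gen (fun n => SS V a G e n x y) (/ (1 - t)) t) as [C1 C2]; auto.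
  left; apply Rinv_0_lt_compat; lra.
  destruct (R_complete _ C1) as [l1 H1]. destruct (R_complete _ C2) as [l2 H2].
  exists (l1, l2). split; auto.
Qed.


Lemma Ccv_sub0 c u : Ccv u C0 -> Ccv (fun n => Csub c (u n)) c.
Proof.
  intros H. pose proof (Ccv_sub (fun _ => c) u c C0 (Ccv_const c) H) as K.
  replace (Csub c C0) with c in K by (destruct c; ceq). exact K.
Qed.

Lemma inverse_exists V a G e p q : NoDup V -> conj_exp p q -> 0 <= a ->
  mu_p q V a G * lpnorm p V (fun v => Cmod (e v)) < 1 ->
  exists M, is_inverse_on V (Amat a G e) M.
Proof.
  intros Hn Hpq Ha Ht.
  set (t := mu_p q V a G * lpnorm p V (fun v => Cmod (e v))) in *.
  assert (Ht0 : 0 <= t) by (unfold t, mu_p; repeat apply Rmult_le_pos; auto; try apply Rmaxl_ge0; apply lpnorm_ge0).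
  set (M := fun x y => match in_dec Nat.eq_dec x V with
                       | left H => proj1_sig (limit_exists V a G e p q x y Hpq Ha H Ht)
                       | right _ => C0 end).
  assert (MS : forall x y, In x V -> Ccv (fun n => SS V a G e n x y) (M x y)).
  { intros x y Hx. unfold M. destruct (in_dec Nat.eq_dec x V) as [H|H].
    apply (proj2_sig (limit_exists V a G e p q x y Hpq Ha H Ht)). contradiction. }
  assert (PZ : forall x y, In x V -> Ccv (fun n => Pw V a G e n x y) C0).
  { intros x y Hx. apply (Ccv_zero_bound _ t 1). lra. lra.
    intros n. rewrite Rmult_1_l. apply (Pw_bound V a G e p q); auto. }
  exists M. split.
  - intros x y Hx Hy.
    apply (Ccv_unique (fun n => Csum V (fun z => Cmul (Amat a G e x z) (SS V a G e n z y)))).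
    + apply Ccv_Csum. intros z Hz. apply Ccv_mul. apply Ccv_const. apply MS; auto.
    + apply (Ccv_ext (fun n => Csub (kron x y) (Pw V a G e n x y))). intros n. symmetry. apply AS; auto.
      apply Ccv_sub0. apply PZ; auto.
  - intros x y Hx Hy.
    apply (Ccv_unique (fun n => Csum V (fun z => Cmul (SS V a G e n x z) (Amat a G e z y)))).
    + apply Ccv_Csum. intros z Hz. apply Ccv_mul. apply MS; auto. apply Ccv_const.
    + apply (Ccv_ext (fun n => Csub (kron x y) (Pw V a G e n x y))). intros n. symmetry. apply SA; auto.
      apply Ccv_sub0. apply PZ; auto.
Qed.

Definition mvec V (G : nat -> nat -> Cplx) (M : nat -> nat -> Cplx) (s v : nat) := Csum V (fun u => Cmul (M v u) (G u s)).
Definition dj V a G (e : nat -> Cplx) s j x := Cmul (RtoC ((- a) ^ j)) (chain V G (repeat e j) s x).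
Fixpoint Dsum V a G e s (N : nat) (x : nat) : Cplx :=
  match N with O => C0 | S N => Cadd (Dsum V a G e s N x) (dj V a G e s N x) end.

Lemma dj_succ V a G e s j x : dj V a G e s (S j) x = Copp (Top V a G e x (dj V a G e s j)).
Proof.
  unfold dj. rewrite Top_scal. unfold Top. simpl chain.
  destruct (Csum V _); ceq.
Qed.

Lemma K_eq V a G e r s j : Kj V a G (repeat e (S j)) r s = Top V a G e r (dj V a G e s j).
Proof.
  unfold Kj, dj. rewrite repeat_length. rewrite Top_scal. unfold Top. simpl chain.
  replace (- a) with (-1 * a) by ring. rewrite Rpow_mult_distr.
  destruct (Csum V _); cunf; simpl; f_equal; ring.
Qed.

Lemma born_eq V a G e N r s : born_partial V a G e N r s = Top V a G e r (Dsum V a G e s N).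
Proof.
  induction N.
  - simpl. symmetry. apply Top_zero.
  - transitivity (Cadd (born_partial V a G e N r s) (Kj V a G (repeat e (S N)) r s)). reflexivity.
    rewrite IHN, K_eq, <- Top_add. reflexivity.
Qed.

Lemma m_eq V a G e M s v : NoDup V ->
  (forall x y, In x V -> In y V -> Csum V (fun z => Cmul (Amat a G e x z) (M z y)) = kron x y) ->
  In v V -> Cadd (mvec V G M s v) (Top V a G e v (mvec V G M s)) = G v s.
Proof.
  intros Hn HM Hv. rewrite <- A_apply by auto. unfold mvec.
  rewrite (Csum_ext_in V _ (fun z => Csum V (fun u => Cmul (Cmul (Amat a G e v z) (M z u)) (G u s)))).
  2:{ intros z _. rewrite <- Csum_mul_l. apply Csum_ext_in. intros u _.
      destruct (Amat a G e v z), (M z u), (G u s); ceq. }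
  rewrite Csum_swap.
  rewrite (Csum_ext_in V _ (fun u => Cmul (kron v u) (G u s))).
  apply (kron_sum_l V v (fun u => G u s)); auto.
  intros u Hu. rewrite Csum_mul_r. rewrite HM; auto.
Qed.

Definition fvec V a G e M s N v := Csub (mvec V G M s v) (Dsum V a G e s N v).

Lemma f_rec V a G e M s N v : NoDup V ->
  (forall x y, In x V -> In y V -> Csum V (fun z => Cmul (Amat a G e x z) (M z y)) = kron x y) ->
  In v V -> fvec V a G e M s (S N) v = Copp (Top V a G e v (fvec V a G e M s N)).
Proof.
  intros Hn HM Hv. induction N.
  - pose proof (m_eq V a G e M s v Hn HM Hv) as Hm.
    rewrite (Top_ext V a G e v (fvec V a G e M s 0) (mvec V G M s)).
    2:{ intros u _. unfold fvec. simpl. destruct (mvec V G M s u); ceq. }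
    unfold fvec. simpl. unfold dj. simpl chain. rewrite <- Hm.
    destruct (mvec V G M s v), (Top V a G e v (mvec V G M s)); ceq.
  - transitivity (Csub (fvec V a G e M s (S N) v) (dj V a G e s (S N) v)).
    { unfold fvec. change (Dsum V a G e s (S (S N)) v) with (Cadd (Dsum V a G e s (S N) v) (dj V a G e s (S N) v)).
      destruct (mvec V G M s v), (Dsum V a G e s (S N) v), (dj V a G e s (S N) v); ceq. }
    rewrite IHN, dj_succ.
    rewrite (Top_ext V a G e v (fvec V a G e M s (S N)) (fun u => Csub (fvec V a G e M s N u) (dj V a G e s N u))).
    2:{ intros u _. unfold fvec. simpl. destruct (mvec V G M s u), (Dsum V a G e s N u), (dj V a G e s N u); ceq. }
    rewrite Top_sub. destruct (Top V a G e v (fvec V a G e M s N)), (Top V a G e v (dj V a G e s N)); ceq.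
Qed.

Lemma Tcontract V a G e p q x w X : conj_exp p q -> 0 <= a -> In x V -> 0 <= X ->
  (forall u, In u V -> Cmod (w u) <= X) ->
  Cmod (Top V a G e x w) <= (mu_p q V a G * lpnorm p V (fun v => Cmod (e v))) * X.
Proof.
  intros Hpq Ha Hx HX H. eapply Rle_trans. apply (Tbound V a G e p q x w X); auto.
  pose proof (mu_bound V a G q x Ha Hx). pose proof (lpnorm_ge0 p V (fun v => Cmod (e v))).
  apply Rmult_le_compat_r; auto. apply Rmult_le_compat_r; auto.
Qed.


Lemma f_bound V a G e M p q s : NoDup V ->
  (forall x y, In x V -> In y V -> Csum V (fun z => Cmul (Amat a G e x z) (M z y)) = kron x y) ->
  conj_exp p q -> 0 <= a -> mu_p q V a G * lpnorm p V (fun v => Cmod (e v)) < 1 ->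
  forall N v, In v V -> Cmod (fvec V a G e M s N v) <=
    (mu_p q V a G * lpnorm p V (fun v => Cmod (e v))) ^ N *
    (lpnorm q V (fun v => Cmod (G v s)) / (1 - mu_p q V a G * lpnorm p V (fun v => Cmod (e v)))).
Proof.
  intros Hn HM Hpq Ha Ht.
  set (t := mu_p q V a G * lpnorm p V (fun v => Cmod (e v))) in *.
  assert (Ht0 : 0 <= t) by (unfold t, mu_p; repeat apply Rmult_le_pos; auto; try apply Rmaxl_ge0; apply lpnorm_ge0).
  destruct (conj_expok p q Hpq) as [Hp Hq].
  set (nb := lpnorm q V (fun v => Cmod (G v s))).
  set (Mx := Rmaxl V (fun v => Cmod (mvec V G M s v))).
  assert (HMx0 : 0 <= Mx) by apply Rmaxl_ge0.
  assert (Hnb : 0 <= nb) by apply lpnorm_ge0.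
  assert (Hm : forall u, In u V -> Cmod (mvec V G M s u) <= Mx).
  { intros u Hu. apply (Rmaxl_ge V (fun v => Cmod (mvec V G M s v))); auto. }
  assert (HMx : Mx <= nb + t * Mx).
  { apply Rmaxl_lub. nra. intros v Hv.
    pose proof (m_eq V a G e M s v Hn HM Hv) as E.
    replace (mvec V G M s v) with (Csub (G v s) (Top V a G e v (mvec V G M s)))
      by (rewrite <- E; destruct (mvec V G M s v), (Top V a G e v (mvec V G M s)); ceq).
    eapply Rle_trans. apply Cmod_sub. apply Rplus_le_compat.
    apply (lpnorm_ge_elem q V (fun v => Cmod (G v s))); auto. intros; apply Cmod_ge0.
    apply (Tcontract V a G e p q); auto. }
  assert (HMx2 : Mx <= nb / (1 - t)).
  { apply Rmult_le_reg_r with (1 - t). lra. unfold Rdiv. rewrite Rmult_assoc, Rinv_l by lra. lra. }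
  assert (K : forall N v, In v V -> Cmod (fvec V a G e M s N v) <= t ^ N * Mx).
  { induction N; intros v Hv.
    - unfold fvec. simpl. replace (Csub (mvec V G M s v) C0) with (mvec V G M s v) by (destruct (mvec V G M s v); ceq).
      rewrite Rmult_1_l. apply Hm; auto.
    - rewrite f_rec by auto. rewrite Cmod_opp.
      eapply Rle_trans. apply (Tcontract V a G e p q); auto.
      apply Rmult_le_pos; auto. apply pow_le; auto. fold t. simpl. lra. }
  intros N v Hv. eapply Rle_trans. apply K; auto. apply Rmult_le_compat_l. apply pow_le; auto. auto.
Qed.

Lemma point_bound V a G e M p q N r s : NoDup V ->
  (forall x y, In x V -> In y V -> Csum V (fun z => Cmul (Amat a G e x z) (M z y)) = kron x y) ->
  conj_exp p q -> 0 <= a -> mu_p q V a G * lpnorm p V (fun v => Cmod (e v)) < 1 ->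
  Cmod (Csub (born_partial V a G e N r s) (Top V a G e r (mvec V G M s))) <=
  a * lpnorm q V (fun v => Cmod (G r v)) * lpnorm p V (fun v => Cmod (e v)) *
    ((mu_p q V a G * lpnorm p V (fun v => Cmod (e v))) ^ N *
    (lpnorm q V (fun v => Cmod (G v s)) / (1 - mu_p q V a G * lpnorm p V (fun v => Cmod (e v))))).
Proof.
  intros Hn HM Hpq Ha Ht.
  assert (Ht0 : 0 <= mu_p q V a G * lpnorm p V (fun v => Cmod (e v))) by (unfold mu_p; repeat apply Rmult_le_pos; auto; try apply Rmaxl_ge0; apply lpnorm_ge0).
  rewrite born_eq, <- Top_sub.
  rewrite (Top_ext V a G e r _ (fun u => Copp (fvec V a G e M s N u))).
  2:{ intros u _. unfold fvec. destruct (Dsum V a G e s N u), (mvec V G M s u); ceq. }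
  rewrite Top_opp, Cmod_opp. apply Tbound; auto.
  apply Rmult_le_pos. apply pow_le; auto. unfold Rdiv. apply Rmult_le_pos. apply lpnorm_ge0.
  left; apply Rinv_0_lt_compat; lra.
  intros u Hu. apply (f_bound V a G e M p q s); auto.
Qed.


Theorem proposition1
  (V dV R_ S_ : list nat) (alpha0 : R) (G0 : nat -> nat -> Cplx) (p q : ext)
  (eta : nat -> Cplx)
  (HV : NoDup V) (HdV : NoDup dV)
  (Hdisj : forall x, In x V -> ~ In x dV)
  (HRnd : NoDup R_) (HSnd : NoDup S_)
  (HR : incl R_ dV) (HS : incl S_ dV) (HRne : R_ <> []) (HSne : S_ <> [])
  (Halpha : 0 < alpha0) (Hpq : conj_exp p q)
  (Hsmall : mu_p q V alpha0 G0 * lpnorm p V (fun v => Cmod (eta v)) < 1) :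
  (exists M, is_inverse_on V (Amat alpha0 G0 eta) M) /\
  forall M, is_inverse_on V (Amat alpha0 G0 eta) M ->
    (exists L : nat -> nat -> Cplx,
       Un_cv (fun N => lpnorm p (list_prod R_ S_)
                (fun rs => Cmod (Csub (born_partial V alpha0 G0 eta N (fst rs) (snd rs))
                                      (L (fst rs) (snd rs))))) 0 /\
       (forall r s, In r R_ -> In s S_ ->
          Lambda V alpha0 G0 eta M r s = Csub (G0 r s) (L r s))) /\
    (forall N : nat, (1 <= N)%nat ->
       lpnorm p (list_prod R_ S_)
         (fun rs => Cmod (Csub (Lambda V alpha0 G0 eta M (fst rs) (snd rs))
                               (Csub (G0 (fst rs) (snd rs))
                                     (born_partial V alpha0 G0 eta N (fst rs) (snd rs)))))
       <= nu_p p q V R_ S_ alpha0 G0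
          * lpnorm p V (fun v => Cmod (eta v)) ^ (S N)
          * mu_p q V alpha0 G0 ^ N
          * / (1 - mu_p q V alpha0 G0 * lpnorm p V (fun v => Cmod (eta v)))).
Proof.
  assert (Ha : 0 <= alpha0) by lra.
  destruct (conj_expok p q Hpq) as [Hp Hq].
  split. { apply (inverse_exists V alpha0 G0 eta p q); auto. }
  intros M [HM _].
  set (E := lpnorm p V (fun v => Cmod (eta v))) in *.
  set (mu := mu_p q V alpha0 G0) in *.
  assert (HE : 0 <= E) by apply lpnorm_ge0.
  assert (Hmu : 0 <= mu) by (unfold mu, mu_p; apply Rmult_le_pos; auto; apply Rmaxl_ge0).
  set (t := mu * E) in *.
  assert (Ht0 : 0 <= t) by (unfold t; apply Rmult_le_pos; auto).
  set (NA := lpnorm p R_ (fun r => lpnorm q V (fun v => Cmod (G0 r v)))).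
  set (NB := lpnorm p S_ (fun s => lpnorm q V (fun v => Cmod (G0 v s)))).
  assert (HNA : 0 <= NA) by apply lpnorm_ge0. assert (HNB : 0 <= NB) by apply lpnorm_ge0.
  set (L := fun r s => Top V alpha0 G0 eta r (mvec V G0 M s)).
  assert (KEY : forall N, lpnorm p (list_prod R_ S_)
      (fun rs => Cmod (Csub (born_partial V alpha0 G0 eta N (fst rs) (snd rs)) (L (fst rs) (snd rs))))
      <= (alpha0 * E * (t ^ N / (1 - t))) * (NA * NB)).
  { intros N. set (K := alpha0 * E * (t ^ N / (1 - t))).
    assert (HK : 0 <= K). { unfold K. apply Rmult_le_pos. apply Rmult_le_pos; auto.
      unfold Rdiv. apply Rmult_le_pos. apply pow_le; auto. left; apply Rinv_0_lt_compat; lra. }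
    eapply Rle_trans. apply (lpnorm_mono p _ _
      (fun rs => K * (lpnorm q V (fun v => Cmod (G0 (fst rs) v)) * lpnorm q V (fun v => Cmod (G0 v (snd rs)))))); auto.
    { intros rs _. split. apply Cmod_ge0. eapply Rle_trans. apply (point_bound V alpha0 G0 eta M p q); auto.
      fold E mu t. unfold K. right. unfold Rdiv. ring. }
    rewrite lpnorm_homog; auto. apply Rmult_le_compat_l; auto.
    apply (lpnorm_prod p R_ S_ (fun r => lpnorm q V (fun v => Cmod (G0 r v))) (fun s => lpnorm q V (fun v => Cmod (G0 v s)))); auto.
    intros; apply lpnorm_ge0. intros; apply lpnorm_ge0.
    intros; apply Rmult_le_pos; apply lpnorm_ge0. }
  split.
  - exists L. split.
    + intros eps He.
      destruct (geom_small t (alpha0 * E / (1 - t) * (NA * NB)) eps) as [N0 HN0].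
      lra. { unfold Rdiv. repeat apply Rmult_le_pos; auto. left; apply Rinv_0_lt_compat; lra. } lra.
      exists N0. intros n Hn. unfold R_dist. rewrite Rminus_0_r, Rabs_right by (apply Rle_ge, lpnorm_ge0).
      eapply Rle_lt_trans. apply KEY. eapply Rle_lt_trans; [|apply (HN0 n Hn)]. right. unfold Rdiv. ring.
    + intros r s _ _. reflexivity.
  - intros N _. eapply Rle_trans.
    apply (lpnorm_mono p _ _ (fun rs => Cmod (Csub (born_partial V alpha0 G0 eta N (fst rs) (snd rs)) (L (fst rs) (snd rs))))); auto.
    { intros rs _. split. apply Cmod_ge0. right. f_equal.
      assert (EL : Lambda V alpha0 G0 eta M (fst rs) (snd rs) = Csub (G0 (fst rs) (snd rs)) (L (fst rs) (snd rs))) by reflexivity.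
      rewrite EL.
      destruct (G0 (fst rs) (snd rs)), (L (fst rs) (snd rs)), (born_partial V alpha0 G0 eta N (fst rs) (snd rs)); ceq. }
    eapply Rle_trans. apply KEY. unfold nu_p. fold NA NB. fold mu E.
    unfold t. rewrite Rpow_mult_distr. right. simpl. unfold Rdiv. ring.
Qed.
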